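(* For $n\le 7$, the independent locus $U_n$ equals all of $\mathcal{M}_{5,n}\setminus\mathcal{M}_{5,n}^3$.
   Context: Work over an algebraically closed field of characteristic not $2,3,5$. $\mathcal{M}_{5,n}$ is the moduli stack of smooth genus $5$ curves with $n$ distinct ordered marked points, and $\mathcal{M}_{5,n}^k$ is the closed locus of curves of gonality $\le k$. Points of $\mathcal{M}_{5,n}\setminus\mathcal{M}_{5,n}^3$ are curves whose canonical embedding in $\mathbb{P}^4$ is a complete intersection of three quadrics. $U_n$ is the open substack of $\mathcal{M}_{5,n}\setminus\mathcal{M}_{5,n}^3$ where the $n$ marked points, in the canonical embedding $C\subset\mathbb{P}^4$, impose independent conditions on quadrics, i.e. $H^0(\mathbb{P}^4,\mathcal{O}(2))\to\bigoplus_{i=1}^n\mathcal{O}(2)|_{p_i}$ is surjective. *)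

(* Defs.v *)
From HB Require Import structures.
From mathcomp Require Import all_boot all_order all_algebra.
From mathcomp Require Import mpoly.
Set Implicit Arguments. Unset Strict Implicit. Unset Printing Implicit Defensive.
Import GRing.Theory.
Local Open Scope ring_scope.

(* Homogeneous coordinates on P^4 over K: vectors 'I_5 -> K. *)
Definition nonzero_vec (K : fieldType) (x : 'I_5 -> K) : Prop := exists j, x j != 0.

Definition proj_eq (K : fieldType) (x y : 'I_5 -> K) : Prop :=
  exists a : K, forall j, x j = a * y j.

Definition on_CI (K : fieldType) (Q : 'I_3 -> {mpoly K[5]}) (x : 'I_5 -> K) : Prop :=
  nonzero_vec x /\ forall k, (Q k).@[x] = 0.

Definition jacobian (K : fieldType) (Q : 'I_3 -> {mpoly K[5]}) (x : 'I_5 -> K)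
  : 'M[K]_(3, 5) := \matrix_(k < 3, j < 5) (mderiv j (Q k)).@[x].

(* Over an
   algebraically closed field these are exactly the canonical models of smooth
   non-trigonal genus 5 curves. *)
Definition smooth_CI_of_quadrics (K : fieldType) (Q : 'I_3 -> {mpoly K[5]}) : Prop :=
  (forall k, Q k \is 2.-homog) /\
  (forall x, on_CI Q x -> \rank (jacobian Q x) = 3%N).

(* The points impose independent conditions on quadrics:
   H^0(P^4, O(2)) -> (+)_i O(2)|_{p_i} is surjective. *)
Definition independent_on_quadrics (K : fieldType) (n : nat) (p : 'I_n -> 'I_5 -> K)
  : Prop :=
  forall c : 'I_n -> K, exists q : {mpoly K[5]},
    q \is 2.-homog /\ forall i, q.@[p i] = c i.

(* Main.v *)
Require Import Defs.
From HB Require Import structures.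
From mathcomp Require Import all_boot all_order all_algebra.
From mathcomp Require Import mpoly.
From mathcomp Require Import ring.
Set Implicit Arguments. Unset Strict Implicit. Unset Printing Implicit Defensive.
Import GRing.Theory.
Local Open Scope ring_scope.
Section Quad.
Variable K : fieldType.

Definition rv (x : 'I_5 -> K) : 'rV[K]_5 := \row_j x j.
Definition qf (A : 'M[K]_5) (x : 'rV[K]_5) : K := (x *m A *m x^T) 0 0.
Definition bf (S : 'M[K]_5) (x y : 'rV[K]_5) : K := (x *m S *m y^T) 0 0.

Lemma addmxE' m n (A B : 'M[K]_(m,n)) i j : (A + B) i j = A i j + B i j.
Proof. by rewrite mxE. Qed.
Lemma scalemxE' m n c (A : 'M[K]_(m,n)) i j : (c *: A) i j = c * A i j.
Proof. by rewrite mxE. Qed.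

Definition QR (q : {mpoly K[5]}) :=
  exists A : 'M[K]_5, (forall x, q.@[x] = qf A (rv x)) /\
    (forall x j, (mderiv j q).@[x] = (rv x *m (A + A^T)) 0 j).

Lemma QR0 : QR 0.
Proof.
exists 0; split=> [x|x j]; rewrite ?meval0 ?mderiv0 ?meval0 /qf.
  by rewrite mulmx0 mul0mx mxE.
by rewrite trmx0 addr0 mulmx0 mxE.
Qed.

Lemma QRD p q : QR p -> QR q -> QR (p + q).
Proof.
move=> [A [HA1 HA2]] [B [HB1 HB2]]; exists (A + B); split=> [x|x j].
  rewrite mevalD HA1 HB1 /qf. by rewrite mulmxDr mulmxDl addmxE'.
rewrite mderivD mevalD HA2 HB2.
have -> : (A + B)^T = A^T + B^T by apply/matrixP=> a b; rewrite !mxE.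
rewrite !mxE -big_split /=; apply: eq_bigr => i _; rewrite !mxE; ring.
Qed.

Lemma QRZ c p : QR p -> QR (c *: p).
Proof.
move=> [A [HA1 HA2]]; exists (c *: A); split=> [x|x j].
  by rewrite mevalZ HA1 /qf -scalemxAr -scalemxAl scalemxE'.
by rewrite mderivZ mevalZ HA2 linearZ -scalerDr -scalemxAr scalemxE'.
Qed.

Lemma mdeg2P (m : 'X_{1..5}) : mdeg m = 2%N ->
  exists i l, m = (U_(i) + U_(l))%MM.
Proof.
move=> hm.
have : [exists i, (0 < m i)%N].
  case: (boolP [exists i, (0 < m i)%N]) => // /existsPn H.
  have : mdeg m = 0%N.
    rewrite mdegE; apply/eqP; rewrite sum_nat_eq0; apply/forallP => i.
    by apply/implyP=> _; move: (H i); rewrite lt0n negbK.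
  by rewrite hm.
move=> /existsP [i hi].
have hle : (U_(i) <= m)%MM.
  apply/mnm_lepP => j; rewrite mnm1E; case: eqP => [<-|]; by [].
have hm1 : mdeg (m - U_(i))%MM = 1%N.
  move: hm; rewrite -{1}(submK hle) mdegD mdeg1 => /eqP.
  by rewrite -[2%N]/(1 + 1)%N eqn_add2r => /eqP.
move/eqP: hm1 => /mdeg1P [l /eqP hl].
exists i, l; rewrite -(submK hle) hl addmC //.
Qed.

Lemma rvmulE (x : 'I_5 -> K) (M : 'M[K]_5) j : (rv x *m M) 0 j = \sum_i x i * M i j.
Proof. by rewrite mxE; apply: eq_bigr => i _; rewrite mxE. Qed.

Lemma mderivXU_eval (x : 'I_5 -> K) (i j : 'I_5) :
  (mderiv j ('X_i : {mpoly K[5]})).@[x] = (i == j)%:R.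
Proof.
rewrite mderivX mevalZ mnm1E; case: eqP => [->|_]; last by rewrite mul0r.
by rewrite -{1}[U_(j)%MM]add0m addmK mpolyX0 meval1 mulr1.
Qed.

Lemma sum_delta1 (F : 'I_5 -> K) (i : 'I_5) : \sum_a F a * (a == i)%:R = F i.
Proof.
rewrite (bigD1 i) //= eqxx mulr1 big1 ?addr0 // => a /negbTE ->; by rewrite mulr0.
Qed.

Lemma QRX (i l : 'I_5) : QR ('X_i * 'X_l).
Proof.
exists (delta_mx i l); split=> [x|x j].
  rewrite mevalM !mevalXU /qf mxE (bigD1 l) //= big1 => [|a /negbTE hal].
    rewrite addr0 mxE !mxE (bigD1 i) //= big1 => [|a /negbTE hai].
      by rewrite addr0 !mxE !eqxx mulr1.
    by rewrite !mxE hai mulr0.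
  rewrite !mxE big1 ?mul0r // => b _; by rewrite !mxE hal andbF mulr0.
rewrite mderivM mevalD !mevalM !mderivXU_eval !mevalXU rvmulE.
under eq_bigr => a _ do rewrite !mxE.
under eq_bigr => a _ do rewrite -!mulnb !natrM mulrDr (mulrC (j == i)%:R) !mulrA.
rewrite big_split /= -!mulr_suml !sum_delta1 (eq_sym j l) (eq_sym j i); ring.
Qed.

Lemma quad_rep (q : {mpoly K[5]}) : q \is 2.-homog -> QR q.
Proof.
move=> hq; rewrite [q]mpolyE.
have : all (fun m => mdeg m == 2%N) (msupp q).
  by apply/allP => m hm; apply/eqP; apply: (dhomog_mf hq).
elim: (msupp q) => [|m s IH] /=; first by move=> _; rewrite big_nil; exact: QR0.
move=> /andP [/eqP hm hs]; rewrite big_cons; apply: QRD; last exact: IH.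
apply: QRZ; have [i [l ->]] := mdeg2P hm.
by rewrite mpolyXD; apply: QRX.
Qed.
End Quad.
Section P.
Variable K : closedFieldType.

Lemma BF (F : K -> K -> K) (g h : {poly K}) (d : nat) (c : K) :
  (forall s, g.[s] = F s 1) -> (forall s, h.[s] = F 1 s) -> c != 0 -> c ^+ d != 1 ->
  F c 1 = c ^+ d * F 1 c^-1 -> exists s t, ((s != 0) || (t != 0)) /\ F s t = 0.
Proof.
move=> hg hh c0 cd hF.
case: (boolP (size g == 1)) => [/eqP sg|/closed_rootP [s hs]]; last first.
  by exists s, 1; rewrite oner_neq0 orbT -hg; split=> //; apply/eqP.
case: (boolP (size h == 1)) => [/eqP sh|/closed_rootP [s hs]]; last first.
  by exists 1, s; rewrite oner_neq0; split=> //; rewrite -hh; apply/eqP.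
have gc : forall s, g.[s] = g`_0.
  by move=> s; rewrite [g]size1_polyC ?sg // hornerC coefC.
have hc : forall s, h.[s] = h`_0.
  by move=> s; rewrite [h]size1_polyC ?sh // hornerC coefC.
exists 1, 1; rewrite oner_neq0; split=> //.
have e1 : F c 1 = F 1 1 by rewrite -!hg !gc.
have e2 : F 1 c^-1 = F 1 1 by rewrite -!hh !hc.
move: hF; rewrite e1 e2 => /eqP; rewrite -subr_eq0 -{1}[F 1 1]mul1r -mulrBl mulf_eq0 subr_eq0 eq_sym (negbTE cd) /=.
by move/eqP.
Qed.

Definition Mpoly (Xp : 'I_5 -> {poly K}) (cst : 'M[K]_3) (cf : 'I_3 -> 'I_3 -> 'rV[K]_5) : 'M[{poly K}]_3 :=
  \matrix_(k,l) ((cst k l)%:P + \sum_j Xp j * (cf k l 0 j)%:P).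

Lemma Mpoly_eval Xp cst cf s :
  (\det (Mpoly Xp cst cf)).[s] = \det (\matrix_(k,l) (cst k l + \sum_j (Xp j).[s] * cf k l 0 j)).
Proof.
rewrite -[LHS]/(horner_eval s _) -det_map_mx; congr (\det _); apply/matrixP => k l.
rewrite !mxE /= /horner_eval hornerD hornerC horner_sum; congr (_ + _).
by apply: eq_bigr => j _; rewrite hornerM hornerC.
Qed.
End P.
Section LA.
Variable K : fieldType.

Lemma complete_basis r (V : 'M[K]_(r,5)) : row_free V ->
  exists U : 'M[K]_5, U \in unitmx /\ forall i : 'I_5, (i < r)%N -> (row i U <= V)%MS.
Proof.
move=> hV; exists (row_ebase V); split; first exact: row_ebase_unit.
move=> i hi.
have hrk : \rank V = r by apply/eqP.
have E : pid_mx (\rank V) *m row_ebase V = invmx (col_ebase V) *m V.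
  by rewrite -[X in _ = _ *m X](mulmx_ebase V) -mulmxA mulKmx // col_ebase_unit.
have -> : row i (row_ebase V) = row (Ordinal hi) (pid_mx (\rank V) *m row_ebase V).
  apply/rowP => j; rewrite !mxE (bigD1 i) //= big1 => [|l /negbTE hl].
    by rewrite !mxE eqxx /= hrk hi mul1r addr0.
    rewrite !mxE /=; case: eqP => [/val_inj hil|_]; last by rewrite mul0r.
  by rewrite hil eqxx in hl.
by rewrite E row_mul submxMl.
Qed.

Lemma rank_drop (J : 'M[K]_(3,5)) (U : 'M[K]_5) (M : 'M[K]_3) (C : 'M[K]_(3,5)) :
  U \in unitmx -> J *m U^T = M *m C -> \det M = 0 -> (\rank J < 3)%N.
Proof.
move=> hU hJ hM.
have : \rank (J *m U^T) = \rank J by apply: mxrankMfree; rewrite row_free_unit unitmx_tr.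
move=> <-; rewrite hJ; apply: (leq_ltn_trans (mxrankM_maxl _ _)).
rewrite ltn_neqAle rank_leq_row andbT.
apply/negP => h; have : M \in unitmx by rewrite -row_free_unit.
by rewrite unitmxE hM unitr0.
Qed.
End LA.
Section Fam.
Variable K : fieldType.
Variable r : nat.
Implicit Types (vs : 'I_r -> 'rV[K]_5) (x : 'rV[K]_5).

Definition famx (vs : 'I_r -> 'rV[K]_5) : 'M[K]_(r,5) := \matrix_(i,j) vs i 0 j.

Lemma row_famx vs i : row i (famx vs) = vs i.
Proof. by apply/rowP => j; rewrite !mxE. Qed.

Lemma mul_famx vs (v : 'rV[K]_r) : v *m famx vs = \sum_i v 0 i *: vs i.
Proof. by rewrite mulmx_sum_row; apply: eq_bigr => i _; rewrite row_famx. Qed.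

Lemma sub_famx vs x : (x <= famx vs)%MS -> exists c : 'I_r -> K, x = \sum_i c i *: vs i.
Proof. by move/submxP => [D ->]; exists (fun i => D 0 i); rewrite mul_famx. Qed.

Lemma famx_sub vs (c : 'I_r -> K) : ((\sum_i c i *: vs i)%R <= famx vs)%MS.
Proof.
have -> : (\sum_i c i *: vs i : 'rV_5) = (\row_i c i) *m famx vs.
  by rewrite mul_famx; apply: eq_bigr => i _; rewrite mxE.
exact: submxMl.
Qed.

Lemma free_famx vs : (forall c : 'I_r -> K, \sum_i c i *: vs i = 0 -> forall i, c i = 0) ->
  row_free (famx vs).
Proof.
move=> H; rewrite -kermx_eq0; apply/negPn/negP => hk.
have [i hi] : exists i, row i (kermx (famx vs)) != 0.
  apply/existsP; move: hk; apply: contraR => /existsPn hn.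
  apply/eqP/row_matrixP => i; rewrite row0; apply/eqP; move: (hn i); by rewrite negbK.
set v := row i _ in hi.
have hv : v *m famx vs = 0 by apply/sub_kermxP; rewrite row_sub.
rewrite mul_famx in hv.
move: (H (fun l => v 0 l) hv) => hz.
move: hi; have -> : v = 0 by apply/rowP => l; rewrite hz mxE.
by rewrite eqxx.
Qed.

Lemma hyperplane vs x : ~~ (x <= famx vs)%MS ->
  exists l : 'cV[K]_5, (forall i, (vs i *m l) 0 0 = 0) /\ (x *m l) 0 0 != 0.
Proof.
rewrite submxE => hx.
have [j hj] : exists j, (x *m cokermx (famx vs)) 0 j != 0.
  apply/existsP; move: hx; apply: contraR => /existsPn hn; rewrite ?negbK.
  apply/eqP/rowP => j; rewrite (eqP (negbNE (hn j))); by rewrite mxE.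
have colE : forall u : 'rV[K]_5, (u *m col j (cokermx (famx vs))) 0 0 = (u *m cokermx (famx vs)) 0 j.
  by move=> u; rewrite !mxE; apply: eq_bigr => k _; rewrite !mxE.
exists (col j (cokermx (famx vs))); split; last by rewrite colE.
move=> i; rewrite colE -row_famx -row_mul mulmx_coker !mxE //.
Qed.
End Fam.
Section BL.
Variable K : fieldType.
Implicit Types (x y z : 'rV[K]_5) (S : 'M[K]_5).

Definition bl B0 x y := (x *m B0 *m y^T) 0 0.

Lemma trD x y : (x + y)^T = x^T + y^T.
Proof. by apply/matrixP => i j; rewrite !mxE. Qed.
Lemma trZ c x : (c *: x)^T = c *: x^T.
Proof. by apply/matrixP => i j; rewrite !mxE. Qed.

Lemma bfDl S x y z : bf S (x + y) z = bf S x z + bf S y z.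
Proof. by rewrite /bf !mulmxDl addmxE'. Qed.
Lemma bfDr S x y z : bf S x (y + z) = bf S x y + bf S x z.
Proof. by rewrite /bf trD mulmxDr addmxE'. Qed.
Lemma bfZl S c x y : bf S (c *: x) y = c * bf S x y.
Proof. by rewrite /bf -!scalemxAl scalemxE'. Qed.
Lemma bfZr S c x y : bf S x (c *: y) = c * bf S x y.
Proof. by rewrite /bf trZ -scalemxAr scalemxE'. Qed.
Lemma bf0r S x : bf S x 0 = 0.
Proof. by rewrite -(scale0r 0) bfZr mul0r. Qed.
Lemma bf_sumr S x (I : finType) (F : I -> 'rV[K]_5) : bf S x (\sum_i F i) = \sum_i bf S x (F i).
Proof. exact: (big_morph (bf S x) (bfDr S x) (bf0r S x)). Qed.

Lemma bl_tr (B0 : 'M[K]_5) x y : (x *m B0^T *m y^T) 0 0 = bl B0 y x.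
Proof.
have -> : x *m B0^T *m y^T = (y *m B0 *m x^T)^T by rewrite !trmx_mul trmxK mulmxA.
by rewrite mxE.
Qed.

Lemma bfE (B0 : 'M[K]_5) x y : bf (B0 + B0^T) x y = bl B0 x y + bl B0 y x.
Proof. by rewrite /bf mulmxDr mulmxDl addmxE' bl_tr. Qed.

Lemma bfC (B0 : 'M[K]_5) x y : bf (B0 + B0^T) x y = bf (B0 + B0^T) y x.
Proof. by rewrite !bfE addrC. Qed.

Lemma blDl (B0 : 'M[K]_5) x y z : bl B0 (x + y) z = bl B0 x z + bl B0 y z.
Proof. by rewrite /bl !mulmxDl addmxE'. Qed.
Lemma blDr (B0 : 'M[K]_5) x y z : bl B0 x (y + z) = bl B0 x y + bl B0 x z.
Proof. by rewrite /bl trD mulmxDr addmxE'. Qed.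

Lemma qfD (B0 : 'M[K]_5) x y : qf B0 (x + y) = qf B0 x + qf B0 y + bf (B0 + B0^T) x y.
Proof.
rewrite bfE -[qf B0 _]/(bl B0 (x + y) (x + y)) blDl !blDr.
rewrite -[qf B0 x]/(bl B0 x x) -[qf B0 y]/(bl B0 y y); ring.
Qed.

Lemma qfZ (B0 : 'M[K]_5) c x : qf B0 (c *: x) = c ^+ 2 * qf B0 x.
Proof. by rewrite /qf trZ -scalemxAr -!scalemxAl !scalemxE' mulrA expr2. Qed.

Lemma bfxx (B0 : 'M[K]_5) x : bf (B0 + B0^T) x x = 2%:R * qf B0 x.
Proof. by rewrite bfE -[qf B0 x]/(bl B0 x x) mulr2n mulrDl mul1r. Qed.

Lemma bf_sum S x y : bf S x y = \sum_j x 0 j * (y *m S^T) 0 j.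
Proof.
rewrite /bf -mulmxA mxE; apply: eq_bigr => j _; congr (_ * _).
rewrite !mxE; apply: eq_bigr => l _; rewrite !mxE mulrC //.
Qed.
End BL.
Section Geo.
Variable K : closedFieldType.
Variable A : 'I_3 -> 'M[K]_5.
Local Notation S k := (A k + (A k)^T).

Definition Jm (x : 'rV[K]_5) : 'M[K]_(3,5) := \matrix_(k, j) (x *m S k) 0 j.

Hypothesis smooth : forall x : 'rV[K]_5, x != 0 -> (forall k, qf (A k) x = 0) -> \rank (Jm x) = 3%N.
Hypothesis h2 : (2%:R : K) != 0.

Lemma JmU x (U : 'M[K]_5) k i : (Jm x *m U^T) k i = bf (S k) x (row i U).
Proof.
rewrite /bf mxE [RHS]mxE; apply: eq_bigr => j _; rewrite !mxE; congr (_ * _).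
Qed.

Lemma sum2 (F : 'I_2 -> K) : \sum_i F i = F 0 + F 1.
Proof. by rewrite !big_ord_recl big_ord0 addr0; congr (F _ + F _); apply: val_inj. Qed.
Lemma sum2v (F : 'I_2 -> 'rV[K]_5) : \sum_i F i = F 0 + F 1.
Proof. by rewrite !big_ord_recl big_ord0 addr0; congr (F _ + F _); apply: val_inj. Qed.

Definition Csh : 'M[K]_(3,5) := \matrix_(l, i) ((i : nat) == (l + 2)%N)%:R.

Lemma sum3 (F : 'I_3 -> K) : \sum_i F i = F ord0 + F (lift ord0 ord0) + F (lift ord0 (lift ord0 ord0)).
Proof. by rewrite !big_ord_recl big_ord0 addr0 addrA. Qed.

Lemma Csh_fact (J : 'M[K]_(3,5)) (M : 'M[K]_3) :
  (forall k (i : 'I_5), (i < 2)%N -> J k i = 0) ->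
  (forall k (l : 'I_3), J k (rshift 2 l) = M k l) -> J = M *m Csh.
Proof.
move=> h0 h1; apply/matrixP => k i; rewrite mxE sum3 !mxE.
case: i => [[|[|[|[|[|//]]]]] hi].
- by rewrite h0 //= !mulr0 !addr0.
- by rewrite h0 //= !mulr0 !addr0.
- by rewrite /= !mulr0 !mulr1 ?addr0 ?add0r -h1; congr (J k _); apply: val_inj.
- by rewrite /= !mulr0 !mulr1 ?addr0 ?add0r -h1; congr (J k _); apply: val_inj.
- by rewrite /= !mulr0 !mulr1 ?addr0 ?add0r -h1; congr (J k _); apply: val_inj.
Qed.

Lemma line_contra (a b : 'rV[K]_5) :
  (forall al be : K, al *: a + be *: b = 0 -> al = 0 /\ be = 0) ->
  (forall k, qf (A k) a = 0) -> (forall k, qf (A k) b = 0) ->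
  (forall k, bf (S k) a b = 0) -> False.
Proof.
move=> ind qa qb bab.
pose vs : 'I_2 -> 'rV[K]_5 := fun i => if i == 0 then a else b.
have fr : row_free (famx vs).
  apply: free_famx => c; rewrite sum2v /vs /= => /ind [h0 h1] i.
  by case: i => [[|[|?]] ?] //; [rewrite -h0|rewrite -h1]; congr c; apply: val_inj.
have [U [hU hrows]] := complete_basis fr.
pose cf (k l : 'I_3) : 'rV[K]_5 := row (rshift 2 l) U *m (S k)^T.
pose M (x : 'rV[K]_5) := \matrix_(k, l) bf (S k) x (row (rshift 2 l) U).
pose F s t := \det (M (s *: a + t *: b)).
have hMe : forall x, M x = \matrix_(k,l) ((0 : 'M[K]_3) k l + \sum_j x 0 j * cf k l 0 j).
  by move=> x; apply/matrixP => k l; rewrite !mxE add0r bf_sum.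
pose Xg (j : 'I_5) := (a 0 j)%:P * 'X + (b 0 j)%:P.
pose Xh (j : 'I_5) := (a 0 j)%:P + (b 0 j)%:P * 'X.
have hg : forall s, (\det (Mpoly Xg 0 cf)).[s] = F s 1.
  move=> s; rewrite Mpoly_eval /F hMe; congr (\det _); apply/matrixP => k l; rewrite !mxE.
  congr (_ + _); apply: eq_bigr => j _; rewrite !mxE /Xg hornerD hornerM hornerX !hornerC; congr (_ * _); ring.
have hh : forall s, (\det (Mpoly Xh 0 cf)).[s] = F 1 s.
  move=> s; rewrite Mpoly_eval /F hMe; congr (\det _); apply/matrixP => k l; rewrite !mxE.
  congr (_ + _); apply: eq_bigr => j _; rewrite !mxE /Xh hornerD hornerM hornerX !hornerC; congr (_ * _); ring.
have hMZ : forall c x, M (c *: x) = c *: M x.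
  by move=> c x; apply/matrixP => k l; rewrite !mxE bfZl.
have cn0 : (-1 : K) != 0 by rewrite oppr_eq0 oner_neq0.
have c3 : (-1 : K) ^+ 3 != 1.
  rewrite -signr_odd /= expr1; apply/negP => /eqP h.
  by move: h2; rewrite mulr2n -{2}h addrN eqxx.
have hF : F (-1) 1 = (-1) ^+ 3 * F 1 (-1)^-1.
  rewrite /F -detZ -hMZ; congr (\det (M _)).
  by rewrite scalerDr !scalerA mulr1 mulrV ?unitfE.
have [s [t [hst hF0]]] := BF hg hh cn0 c3 hF.
pose x := s *: a + t *: b.
have xn0 : x != 0.
  apply/negP => /eqP /ind [hs ht]; by move: hst; rewrite hs ht eqxx.
have qx : forall k, qf (A k) x = 0.
  by move=> k; rewrite /x qfD !qfZ bfZl bfZr qa qb bab !mulr0 !addr0.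
have hxa : forall k, bf (S k) x a = 0.
  by move=> k; rewrite /x bfDl !bfZl bfxx qa (bfC (A k)) bab !mulr0 addr0.
have hxb : forall k, bf (S k) x b = 0.
  by move=> k; rewrite /x bfDl !bfZl bfxx qb bab !mulr0 addr0.
have := smooth xn0 qx.
have : (\rank (Jm x) < 3)%N.
  apply: (rank_drop (M := M x) (C := Csh) hU) => //.
  apply: Csh_fact => [k i hi|k l]; last by rewrite JmU mxE.
  rewrite JmU; have := hrows i hi; move/sub_famx => [c ->].
  by rewrite bf_sumr sum2 /vs /= !bfZr hxa hxb !mulr0 addr0.
by move=> h1 h2'; rewrite h2' in h1.
Qed.
Hypothesis h15 : (15%:R : K) != 0.

Lemma qf3 k (p a b : 'rV[K]_5) x1 x2 x3 :
  qf (A k) p = 0 -> qf (A k) a = 0 -> qf (A k) b = 0 ->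
  qf (A k) (x1 *: p + x2 *: a + x3 *: b) =
  x2 * x3 * bf (S k) a b + x1 * x3 * bf (S k) p b + x1 * x2 * bf (S k) p a.
Proof.
move=> qp qa qb; rewrite !qfD !qfZ qp qa qb !bfDl !bfZl !bfZr; ring.
Qed.

Lemma bf3 k (p a b : 'rV[K]_5) x1 x2 x3 y1 y2 y3 :
  qf (A k) p = 0 -> qf (A k) a = 0 -> qf (A k) b = 0 ->
  bf (S k) (x1 *: p + x2 *: a + x3 *: b) (y1 *: p + y2 *: a + y3 *: b) =
  (x2 * y3 + x3 * y2) * bf (S k) a b + (x1 * y3 + x3 * y1) * bf (S k) p b
  + (x1 * y2 + x2 * y1) * bf (S k) p a.
Proof.
move=> qp qa qb; rewrite !bfDl !bfDr !bfZl !bfZr !bfxx qp qa qb.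
rewrite (bfC (A k) a p) (bfC (A k) b p) (bfC (A k) b a); ring.
Qed.

Lemma rank_drop2 (J : 'M[K]_(3,5)) (U : 'M[K]_5) (M : 'M[K]_3) :
  U \in unitmx ->
  (forall i : 'I_5, exists v : 'rV[K]_3, forall k, (J *m U^T) k i = \sum_l v 0 l * M k l) ->
  \det M = 0 -> (\rank J < 3)%N.
Proof.
move=> hU hcol hM.
have : \rank (J *m U^T) = \rank J by apply: mxrankMfree; rewrite row_free_unit unitmx_tr.
move=> <-; rewrite -mxrank_tr.
have hs : ((J *m U^T)^T <= M^T)%MS.
  apply/row_subP => i; have [v hv] := hcol i.
  have -> : row i (J *m U^T)^T = v *m M^T.
    by apply/rowP => k; rewrite [LHS]mxE [LHS]mxE hv [RHS]mxE; apply: eq_bigr => l _; rewrite !mxE.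
  exact: submxMl.
apply: (leq_ltn_trans (mxrankS hs)); rewrite mxrank_tr.
rewrite ltn_neqAle rank_leq_row andbT.
apply/negP => h; have : M \in unitmx by rewrite -row_free_unit.
by rewrite unitmxE hM unitr0.
Qed.

Lemma sum3v (F : 'I_3 -> 'rV[K]_5) : \sum_i F i = F ord0 + F (lift ord0 ord0) + F (lift ord0 (lift ord0 ord0)).
Proof. by rewrite !big_ord_recl big_ord0 addr0 addrA. Qed.

Lemma conic_contra (p a b : 'rV[K]_5) (c1 c2 c3 d1 d2 d3 : K) :
  (forall x1 x2 x3 : K, x1 *: p + x2 *: a + x3 *: b = 0 -> [/\ x1 = 0, x2 = 0 & x3 = 0]) ->
  (forall k, qf (A k) p = 0) -> (forall k, qf (A k) a = 0) -> (forall k, qf (A k) b = 0) ->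
  (forall k, qf (A k) (c1 *: p + c2 *: a + c3 *: b) = 0) ->
  (forall k, qf (A k) (d1 *: p + d2 *: a + d3 *: b) = 0) ->
  c1 != 0 -> c2 != 0 -> c3 != 0 -> d1 != 0 -> d2 != 0 -> d3 != 0 ->
  c3 * d2 != c2 * d3 -> c1 * d3 != c3 * d1 -> c2 * d1 != c1 * d2 -> False.
Proof.
move=> ind qp qa qb qc qd hc1 hc2 hc3 hd1 hd2 hd3 e1 e2 e3.
pose al k := bf (S k) a b; pose be k := bf (S k) p b; pose ga k := bf (S k) p a.
pose alpha := c1 * d1 * (c3 * d2 - c2 * d3).
pose beta := c2 * d2 * (c1 * d3 - c3 * d1).
pose gamma := c3 * d3 * (c2 * d1 - c1 * d2).
have an0 : alpha != 0 by rewrite !mulf_neq0 // subr_eq0.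
have bn0 : beta != 0 by rewrite !mulf_neq0 // subr_eq0.
have gn0 : gamma != 0 by rewrite !mulf_neq0 // subr_eq0.
have Ec : forall k, c2 * c3 * al k + c1 * c3 * be k + c1 * c2 * ga k = 0.
  by move=> k; rewrite -(qc k) qf3.
have Ed : forall k, d2 * d3 * al k + d1 * d3 * be k + d1 * d2 * ga k = 0.
  by move=> k; rewrite -(qd k) qf3.
pose kap k := al k / alpha.
have hal : forall k, al k = kap k * alpha by move=> k; rewrite /kap mulfVK.
have hbe : forall k, be k = kap k * beta.
  move=> k; have H : alpha * be k - beta * al k =
    d1 * d2 * (c2 * c3 * al k + c1 * c3 * be k + c1 * c2 * ga k)
    - c1 * c2 * (d2 * d3 * al k + d1 * d3 * be k + d1 * d2 * ga k) by rewrite /alpha /beta; ring.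
  rewrite Ec Ed !mulr0 subr0 in H; move/eqP: H; rewrite subr_eq0 => /eqP H.
  rewrite /kap; apply: (mulfI an0); rewrite H; field; exact: an0.
have hga : forall k, ga k = kap k * gamma.
  move=> k; have H : alpha * ga k - gamma * al k =
    - (d1 * d3 * (c2 * c3 * al k + c1 * c3 * be k + c1 * c2 * ga k)
    - c1 * c3 * (d2 * d3 * al k + d1 * d3 * be k + d1 * d2 * ga k)) by rewrite /alpha /gamma; ring.
  rewrite Ec Ed !mulr0 subr0 oppr0 in H; move/eqP: H; rewrite subr_eq0 => /eqP H.
  rewrite /kap; apply: (mulfI an0); rewrite H; field; exact: an0.
pose ph1 s t := - (t * (alpha * s + beta * t)).
pose ph2 s t := - (s * (alpha * s + beta * t)).
pose ph3 s t := gamma * s * t.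
pose X s t := ph1 s t *: p + ph2 s t *: a + ph3 s t *: b.
have qX : forall s t k, qf (A k) (X s t) = 0.
  move=> s t k; rewrite qf3 // -[bf _ a b]/(al k) -[bf _ p b]/(be k) -[bf _ p a]/(ga k) hal hbe hga /ph1 /ph2 /ph3; ring.
pose vs : 'I_3 -> 'rV[K]_5 := fun i => if i == ord0 then p else if i == lift ord0 ord0 then a else b.
have fr : row_free (famx vs).
  apply: free_famx => c; rewrite sum3v /vs /= => /ind [h0 h1 h2''] i.
  case: i => [[|[|[|//]]] hi]; [rewrite -h0|rewrite -h1|rewrite -h2'']; congr c; exact: val_inj.
have [U [hU hrows]] := complete_basis fr.
pose u1 := row (@Ordinal 5 3 isT) U; pose u2 := row (@Ordinal 5 4 isT) U.
pose M (x : 'rV[K]_5) : 'M[K]_3 := \matrix_(k, l) (if l == ord0 then kap k else if l == lift ord0 ord0 then bf (S k) x u1 else bf (S k) x u2).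
pose cst : 'M[K]_3 := \matrix_(k, l) (if l == ord0 then kap k else 0).
pose cf (k l : 'I_3) : 'rV[K]_5 := if l == ord0 then 0 else if l == lift ord0 ord0 then u1 *m (S k)^T else u2 *m (S k)^T.
have hMe : forall x : 'rV[K]_5, M x = \matrix_(k,l) (cst k l + \sum_j x 0 j * cf k l 0 j).
  move=> x; apply/matrixP => k l; rewrite !mxE /cf.
  case: (l == ord0); first by rewrite big1 ?addr0 // => j _; rewrite mxE mulr0.
  by rewrite add0r; case: (l == lift ord0 ord0); rewrite bf_sum.
pose F s t := \det (M (X s t)).
pose P1 : {poly K} := - (alpha%:P * 'X + beta%:P).
pose P2 : {poly K} := - ('X * (alpha%:P * 'X + beta%:P)).
pose P3 : {poly K} := gamma%:P * 'X.
pose Q1 : {poly K} := - ('X * (alpha%:P + beta%:P * 'X)).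
pose Q2 : {poly K} := - (alpha%:P + beta%:P * 'X).
pose Xg (j : 'I_5) := P1 * (p 0 j)%:P + P2 * (a 0 j)%:P + P3 * (b 0 j)%:P.
pose Xh (j : 'I_5) := Q1 * (p 0 j)%:P + Q2 * (a 0 j)%:P + P3 * (b 0 j)%:P.
have hg : forall s, (\det (Mpoly Xg cst cf)).[s] = F s 1.
  move=> s; rewrite Mpoly_eval /F hMe; congr (\det _); apply/matrixP => k l; rewrite !mxE.
  congr (_ + _); apply: eq_bigr => j _; congr (_ * _).
  rewrite /Xg /P1 /P2 /P3 !hornerE !mxE /ph1 /ph2 /ph3; ring.
have hh : forall s, (\det (Mpoly Xh cst cf)).[s] = F 1 s.
  move=> s; rewrite Mpoly_eval /F hMe; congr (\det _); apply/matrixP => k l; rewrite !mxE.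
  congr (_ + _); apply: eq_bigr => j _; congr (_ * _).
  rewrite /Xh /Q1 /Q2 /P3 !hornerE !mxE /ph1 /ph2 /ph3; ring.
have hMZ : forall (lam : K) x, \det (M (lam *: x)) = lam ^+ 2 * \det (M x).
  move=> lam x.
  have -> : M (lam *: x) = M x *m diag_mx (\row_l (if l == ord0 then 1 else lam)).
    apply/matrixP => k l; rewrite mul_mx_diag !mxE.
    case: (l == ord0); first by rewrite mulr1.
    by case: (l == lift ord0 ord0); rewrite bfZl mulrC.
  rewrite det_mulmx det_diag !big_ord_recl big_ord0 !mxE /=; ring.
have c0 : (2%:R : K) != 0 := h2.
have c4 : (2%:R : K) ^+ 4 != 1.
  apply/negP => /eqP h; move: h15; have -> : (15%:R : K) = 2%:R ^+ 4 - 1.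
    by rewrite -natrX (_ : (2 ^ 4 = 15 + 1)%N) // natrD addrK.
  by rewrite h subrr eqxx.
have hF : F 2%:R 1 = 2%:R ^+ 4 * F 1 (2%:R)^-1.
  rewrite /F -[4%N]/(2 * 2)%N exprM -hMZ; congr (\det (M _)).
  rewrite /X !scalerDr !scalerA /ph1 /ph2 /ph3; congr (_ *: _ + _ *: _ + _ *: _); field; exact: c0.
have [s [t [hst hF0]]] := BF hg hh c0 c4 hF.
pose x := X s t.
have xn0 : x != 0.
  apply/negP => /eqP /ind [h1 h2' h3].
  move: h3; rewrite /ph3 => /eqP; rewrite 2!mulf_eq0 (negbTE gn0) /= => /orP [] /eqP hz.
    move: h1; rewrite /ph1 hz mulr0 add0r => /eqP; rewrite oppr_eq0 2!mulf_eq0 (negbTE bn0) /= orbb => /eqP ht.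
    by move: hst; rewrite hz ht eqxx.
  move: h2'; rewrite /ph2 hz mulr0 addr0 => /eqP; rewrite oppr_eq0 2!mulf_eq0 (negbTE an0) /= orbb => /eqP hs.
  by move: hst; rewrite hz hs eqxx.
have := smooth xn0 (qX s t).
have : (\rank (Jm x) < 3)%N.
  apply: (rank_drop2 (M := M x) hU) => //.
  have hlow : forall i : 'I_5, (i < 3)%N -> exists v : 'rV[K]_3, forall k, (Jm x *m U^T) k i = \sum_l v 0 l * M x k l.
    move=> i hi; have := hrows i hi; move/sub_famx => [c hc].
    rewrite sum3v /vs /= in hc.
    pose g := (ph2 s t * c (lift ord0 (lift ord0 ord0)) + ph3 s t * c (lift ord0 ord0)) * alpha
      + (ph1 s t * c (lift ord0 (lift ord0 ord0)) + ph3 s t * c ord0) * beta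
      + (ph1 s t * c (lift ord0 ord0) + ph2 s t * c ord0) * gamma.
    exists (\row_l (if l == ord0 then g else 0)) => k.
    rewrite JmU hc /x /X bf3 // -[bf _ a b]/(al k) -[bf _ p b]/(be k) -[bf _ p a]/(ga k) hal hbe hga.
    rewrite sum3 !mxE /= /g; ring.
  case=> [[|[|[|[|[|//]]]]] hi].
  - exact: hlow.
  - exact: hlow.
  - exact: hlow.
  - exists (\row_l (l == lift ord0 ord0)%:R) => k; rewrite JmU sum3 !mxE /=.
    by rewrite !mul0r mul1r add0r addr0; congr (bf _ _ (row _ _)); exact: val_inj.
  - exists (\row_l (l == lift ord0 (lift ord0 ord0))%:R) => k; rewrite JmU sum3 !mxE /=.
    by rewrite !mul0r mul1r !add0r; congr (bf _ _ (row _ _)); exact: val_inj.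
by move=> hlt heq; rewrite heq in hlt.
Qed.
End Geo.
Section Main.
Variable K : closedFieldType.
Variable A : 'I_3 -> 'M[K]_5.
Hypothesis smooth : forall x : 'rV[K]_5, x != 0 -> (forall k, qf (A k) x = 0) -> \rank (Jm A x) = 3%N.
Hypothesis h2 : (2%:R : K) != 0.
Hypothesis h15 : (15%:R : K) != 0.
Variable n : nat.
Variable P : 'I_n -> 'rV[K]_5.
Hypothesis nzP : forall i, P i != 0.
Hypothesis qP : forall i k, qf (A k) (P i) = 0.
Hypothesis dP : forall i j, i != j -> ~ exists c, P i = c *: P j.

Lemma indep2 i j al be : i != j -> al *: P i + be *: P j = 0 -> al = 0 /\ be = 0.
Proof.
move=> hij h; have hb : be = 0.
  apply/eqP; apply/negP => /negP hb; apply: (dP (i := j) (j := i)); first by rewrite eq_sym.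
  exists (- al / be); apply: (scalerI hb); rewrite scalerA mulrC divfK //.
  by rewrite scaleNr; apply/eqP; rewrite -addr_eq0 addrC h.
split=> //; move: h; rewrite hb scale0r addr0 => /eqP; rewrite scaler_eq0 (negbTE (nzP i)) orbF.
by move/eqP.
Qed.

Lemma indep3 i j l al be ga : i != j -> i != l -> j != l ->
  al *: P i + be *: P j + ga *: P l = 0 -> [/\ al = 0, be = 0 & ga = 0].
Proof.
move=> hij hil hjl h.
have [g0|gn0] := eqVneq ga 0.
  move: h; rewrite g0 scale0r addr0 => /(indep2 hij) [-> ->]; by split.
exfalso.
have [a0|an0] := eqVneq al 0.
  move: h; rewrite a0 scale0r add0r => /(indep2 hjl) [_ hg]; by rewrite hg eqxx in gn0.
have [b0|bn0] := eqVneq be 0.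
  move: h; rewrite b0 scale0r addr0 => /(indep2 hil) [_ hg]; by rewrite hg eqxx in gn0.
have hPl : P l = (- al / ga) *: P i + (- be / ga) *: P j.
  apply: (scalerI gn0); rewrite scalerDr !scalerA ![ga * _]mulrC !divfK // !scaleNr.
  by apply/eqP; rewrite -opprD -addr_eq0 addrC h.
apply: (@line_contra K A smooth h2 (P i) (P j)).
- by move=> x y /(indep2 hij).
- by move=> k; apply: qP.
- by move=> k; apply: qP.
- move=> k; move: (qP l k); rewrite hPl qfD !qfZ !qP !mulr0 !add0r bfZl bfZr.
  move/eqP; rewrite !mulf_eq0 !oppr_eq0 !invr_eq0 (negbTE an0) (negbTE bn0) (negbTE gn0) /=.
  by move/eqP.
Qed.
Definition vs3 (x y z : 'rV[K]_5) : 'I_3 -> 'rV[K]_5 :=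
  fun i => if i == ord0 then x else if i == lift ord0 ord0 then y else z.
Definition sp3 (x y z v : 'rV[K]_5) : bool := (v <= famx (vs3 x y z))%MS.

Lemma sp3P x y z v : reflect (exists al be ga, v = al *: x + be *: y + ga *: z) (sp3 x y z v).
Proof.
apply: (iffP idP).
  move/sub_famx => [c ->]; rewrite sum3v /vs3 /=.
  by exists (c ord0), (c (lift ord0 ord0)), (c (lift ord0 (lift ord0 ord0))).
move=> [al [be [ga ->]]].
pose c : 'I_3 -> K := fun i => if i == ord0 then al else if i == lift ord0 ord0 then be else ga.
have -> : al *: x + be *: y + ga *: z = \sum_i c i *: vs3 x y z i by rewrite sum3v.
exact: famx_sub.
Qed.

Lemma sp3_swap12 x y z v : sp3 x y z v = sp3 y x z v.
Proof.
apply/sp3P/sp3P => [[al [be [ga ->]]]|[al [be [ga ->]]]]; exists be, al, ga;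
  by rewrite [_ *: x + _]addrC.
Qed.
Lemma sp3_swap23 x y z v : sp3 x y z v = sp3 x z y v.
Proof.
apply/sp3P/sp3P => [[al [be [ga ->]]]|[al [be [ga ->]]]]; exists al, ga, be;
  by rewrite -!addrA [_ *: y + _]addrC.
Qed.

Lemma comb_zero (u v : 'rV[K]_5) al be : 1 *: (al *: u + be *: v) + (- al) *: u + (- be) *: v = 0.
Proof. by rewrite scale1r !scaleNr addrAC addrK subrr. Qed.

Lemma good0 i : ~~ sp3 0 0 0 (P i).
Proof.
apply/negP => /sp3P [al [be [ga h]]]; move: (nzP i); by rewrite h !scaler0 !addr0 eqxx.
Qed.

Lemma good1 i a : a != i -> ~~ sp3 (P a) 0 0 (P i).
Proof.
move=> hai; apply/negP => /sp3P [al [be [ga h]]]; apply: (dP (i := i) (j := a)).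
  by rewrite eq_sym.
by exists al; rewrite h !scaler0 !addr0.
Qed.

Lemma good2 i a b : a != i -> b != i -> a != b -> ~~ sp3 (P a) (P b) 0 (P i).
Proof.
move=> hai hbi hab; apply/negP => /sp3P [al [be [ga h]]].
have := @indep3 i a b 1 (- al) (- be); rewrite eq_sym hai eq_sym hbi hab => /(_ isT isT isT).
by rewrite h scaler0 addr0 comb_zero => /(_ erefl) [/eqP]; rewrite oner_eq0.
Qed.

Lemma in3 i a b c al be ga : i != a -> i != b -> i != c -> a != b -> a != c -> b != c ->
  P i = al *: P a + be *: P b + ga *: P c -> [/\ al != 0, be != 0 & ga != 0].
Proof.
move=> hia hib hic hab hac hbc h.
split; apply/negP => /eqP h0.
- have := @indep3 i b c 1 (- be) (- ga) hib hic hbc.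
  by rewrite h h0 scale0r add0r comb_zero => /(_ erefl) [/eqP]; rewrite oner_eq0.
- have := @indep3 i a c 1 (- al) (- ga) hia hic hac.
  by rewrite h h0 scale0r addr0 comb_zero => /(_ erefl) [/eqP]; rewrite oner_eq0.
- have := @indep3 i a b 1 (- al) (- be) hia hib hab.
  by rewrite h h0 scale0r addr0 comb_zero => /(_ erefl) [/eqP]; rewrite oner_eq0.
Qed.
Ltac neq := match goal with |- is_true (?x != ?y) => first [assumption | rewrite eq_sym; assumption] end.

Lemma cross_ne i d a b c c1 c2 c3 d1 d2 d3 : i != d -> i != a -> d != a ->
  P i = c1 *: P a + c2 *: P b + c3 *: P c -> P d = d1 *: P a + d2 *: P b + d3 *: P c ->
  d2 != 0 -> c3 * d2 != c2 * d3.
Proof.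
move=> hid hia hda hi hd hd2; apply/negP => /eqP e.
have := @indep3 i d a d2 (- c2) (- (d2 * c1 - c2 * d1)) hid hia hda.
have -> : d2 *: P i + - c2 *: P d + - (d2 * c1 - c2 * d1) *: P a = 0.
  rewrite hi hd; apply/rowP => j; rewrite !mxE.
  transitivity ((d2 * c3 - c2 * d3) * P c 0 j); first ring.
  by rewrite mulrC in e; rewrite e subrr mul0r.
by move=> /(_ erefl) [h0 _ _]; rewrite h0 eqxx in hd2.
Qed.

Lemma no5 i a b c d : i != a -> i != b -> i != c -> i != d -> a != b -> a != c -> a != d ->
  b != c -> b != d -> c != d ->
  sp3 (P a) (P b) (P c) (P i) -> sp3 (P a) (P b) (P c) (P d) -> False.
Proof.
move=> hia hib hic hid hab hac had hbc hbd hcd /sp3P [c1 [c2 [c3 hi]]] /sp3P [d1 [d2 [d3 hd]]].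
have [nc1 nc2 nc3] := in3 hia hib hic hab hac hbc hi.
have hda : d != a by rewrite eq_sym.
have hdb : d != b by rewrite eq_sym.
have hdc : d != c by rewrite eq_sym.
have [nd1 nd2 nd3] := in3 hda hdb hdc hab hac hbc hd.
have e1 : c3 * d2 != c2 * d3 by apply: (cross_ne hid hia _ hi hd) => //; neq.
have e2 : c1 * d3 != c3 * d1.
  apply: (@cross_ne i d b c a c2 c3 c1 d2 d3 d1) => //; try neq.
  - by rewrite hi; apply/rowP => j; rewrite !mxE; ring.
  - by rewrite hd; apply/rowP => j; rewrite !mxE; ring.
have e3 : c2 * d1 != c1 * d2.
  apply: (@cross_ne i d c a b c3 c1 c2 d3 d1 d2) => //; try neq.
  - by rewrite hi; apply/rowP => j; rewrite !mxE; ring.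
  - by rewrite hd; apply/rowP => j; rewrite !mxE; ring.
apply: (@conic_contra K A smooth h2 h15 (P a) (P b) (P c) c1 c2 c3 d1 d2 d3) => //.
- by move=> x1 x2 x3 /(indep3 hab hac hbc).
- by move=> k; rewrite -hi qP.
- by move=> k; rewrite -hd qP.
Qed.
Lemma two_bad i a b c d : i != a -> i != b -> i != c -> i != d -> a != b -> a != c -> a != d ->
  b != c -> b != d -> c != d ->
  sp3 (P a) (P b) (P c) (P i) -> sp3 (P a) (P b) (P d) (P i) -> False.
Proof.
move=> hia hib hic hid hab hac had hbc hbd hcd h1 h2'.
apply: (no5 hia hib hic hid hab hac had hbc hbd hcd h1).
move: h1 h2' => /sp3P [al [be [ga hi]]] /sp3P [al' [be' [de hi']]].
have [_ _ nde] := in3 hia hib hid hab had hbd hi'.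
apply/sp3P; exists ((al - al') / de), ((be - be') / de), (ga / de).
apply/rowP => j; have := congr1 (fun v : 'rV[K]_5 => v 0 j) hi; have := congr1 (fun v : 'rV[K]_5 => v 0 j) hi'.
rewrite !mxE => e2 e1.
apply: (mulfI nde).
have -> : de * P d 0 j = P i 0 j - al' * P a 0 j - be' * P b 0 j by rewrite e2; ring.
rewrite e1; field; exact: nde.
Qed.

Definition GoodL i := exists l1 l2 : 'cV[K]_5,
  (forall j, j != i -> (P j *m l1) 0 0 * (P j *m l2) 0 0 = 0) /\ (P i *m l1) 0 0 * (P i *m l2) 0 0 != 0.

Lemma split_ok i x1 y1 z1 x2 y2 z2 : ~~ sp3 x1 y1 z1 (P i) -> ~~ sp3 x2 y2 z2 (P i) ->
  (forall j, j != i -> P j \in [:: x1; y1; z1; x2; y2; z2]) -> GoodL i.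
Proof.
move=> g1 g2 hcov.
have [l1 [hl1 nl1]] := hyperplane g1.
have [l2 [hl2 nl2]] := hyperplane g2.
exists l1, l2; split; last by rewrite mulf_neq0.
have e1 : forall v, v \in [:: x1; y1; z1] -> (v *m l1) 0 0 = 0.
  move=> v; rewrite !inE => /orP [/eqP ->|/orP [/eqP ->|/eqP ->]].
  - exact: (hl1 ord0).
  - exact: (hl1 (lift ord0 ord0)).
  - exact: (hl1 (lift ord0 (lift ord0 ord0))).
have e2 : forall v, v \in [:: x2; y2; z2] -> (v *m l2) 0 0 = 0.
  move=> v; rewrite !inE => /orP [/eqP ->|/orP [/eqP ->|/eqP ->]].
  - exact: (hl2 ord0).
  - exact: (hl2 (lift ord0 ord0)).
  - exact: (hl2 (lift ord0 (lift ord0 ord0))).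
move=> j /hcov; rewrite -[[:: _; _; _; _; _; _]]/([:: x1; y1; z1] ++ [:: x2; y2; z2]) mem_cat.
by case/orP => [/e1 ->|/e2 ->]; rewrite ?mul0r ?mulr0.
Qed.

Ltac cov hcov := let j := fresh "j" in let H := fresh "H" in
  move=> j /hcov H; rewrite !inE in H *;
  repeat (case/orP: H => [/eqP -> | H]; first by rewrite eqxx ?orbT);
  move/eqP: H => ->; by rewrite eqxx ?orbT.

Lemma six_core i a b c d e f : uniq [:: i; a; b; c; d; e; f] ->
  (forall j, j != i -> P j \in [:: P a; P b; P c; P d; P e; P f]) ->
  sp3 (P a) (P b) (P c) (P i) -> GoodL i.
Proof.
move=> U hcov hbad.
move: U; rewrite /= !inE !negb_or ?andbT -!andbA; repeat (case/andP => ?); try move=> ?.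
have gx : forall x, x != i -> x != a -> x != b -> x != c -> ~~ sp3 (P a) (P b) (P x) (P i).
  move=> x hx1 hx2 hx3 hx4; apply/negP => hb.
  apply: (two_bad (i := i) (a := a) (b := b) (c := c) (d := x) _ _ _ _ _ _ _ _ _ _ hbad hb); neq.
case h1 : (sp3 (P c) (P e) (P f) (P i)).
  case h2c : (sp3 (P c) (P d) (P f) (P i)).
    exfalso; rewrite sp3_swap23 in h1; rewrite sp3_swap23 in h2c.
    apply: (two_bad (i := i) (a := c) (b := f) (c := e) (d := d) _ _ _ _ _ _ _ _ _ _ h1 h2c); neq.
  have ge : ~~ sp3 (P a) (P b) (P e) (P i) by apply: gx; neq.
  apply: (split_ok ge (negbT h2c)).
  cov hcov.
have gd : ~~ sp3 (P a) (P b) (P d) (P i) by apply: gx; neq.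
apply: (split_ok gd (negbT h1)).
cov hcov.
Qed.

Lemma allGood i : (n <= 7)%N -> GoodL i.
Proof.
move=> hn.
pose s := [seq j <- enum 'I_n | j != i].
have hmem : forall j, (j \in s) = (j != i) by move=> j; rewrite mem_filter mem_enum andbT.
have us : uniq (i :: s) by rewrite /= hmem eqxx /= filter_uniq // enum_uniq.
have hsz : (size s <= 6)%N.
  have : (size s <= #|[set~ i]|)%N.
    rewrite -(card_uniqP (filter_uniq _ (enum_uniq 'I_n))).
    by apply: subset_leq_card; apply/subsetP => j; rewrite hmem !inE.
  rewrite cardsC1 card_ord => h; apply: (leq_trans h); move: hn; case: (n) => // m; by rewrite ltnS.
have hcov : forall j, j != i -> P j \in map P s by move=> j hj; rewrite map_f // hmem.
clearbody s; move: us hsz hcov; clear hmem; case: s => [|a [|b [|c [|d [|e [|f [|g s']]]]]]] /= U hsz hcov //;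
  move: U; rewrite /= ?inE ?negb_or ?andbT -?andbA; repeat (case/andP => ?); try move=> ?.
- apply: (split_ok (good0 i) (good0 i)) => j /hcov; by rewrite in_nil.
- apply: (split_ok (good1 (i := i) (a := a) _) (good0 i)); first neq. cov hcov.
- apply: (split_ok (good1 (i := i) (a := a) _) (good1 (i := i) (a := b) _)); try neq. cov hcov.
- apply: (split_ok (good2 (i := i) (a := a) (b := b) _ _ _) (good1 (i := i) (a := c) _)); try neq. cov hcov.
- apply: (split_ok (good2 (i := i) (a := a) (b := b) _ _ _) (good2 (i := i) (a := c) (b := d) _ _ _)); try neq. cov hcov.
- case h1 : (sp3 (P a) (P b) (P c) (P i)).
    have gd : ~~ sp3 (P a) (P b) (P d) (P i).
      apply/negP => h2'; apply: (two_bad (i := i) (a := a) (b := b) (c := c) (d := d) _ _ _ _ _ _ _ _ _ _ h1 h2'); neq.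
    apply: (split_ok gd (good2 (i := i) (a := c) (b := e) _ _ _)); try neq. cov hcov.
  apply: (split_ok (negbT h1) (good2 (i := i) (a := d) (b := e) _ _ _)); try neq. cov hcov.
- case h1 : (sp3 (P a) (P b) (P c) (P i)).
    have U1 : uniq [:: i; a; b; c; d; e; f].
      by rewrite /= !inE !negb_or; repeat (apply/andP; split); try neq.
    have C1 : forall j, j != i -> P j \in [:: P a; P b; P c; P d; P e; P f] by cov hcov.
    exact: (six_core U1 C1 h1).
  case h2' : (sp3 (P d) (P e) (P f) (P i)).
    have U1 : uniq [:: i; d; e; f; a; b; c].
      by rewrite /= !inE !negb_or; repeat (apply/andP; split); try neq.
    have C1 : forall j, j != i -> P j \in [:: P d; P e; P f; P a; P b; P c] by cov hcov.
    exact: (six_core U1 C1 h2').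
  apply: (split_ok (negbT h1) (negbT h2')). cov hcov.
Qed.
End Main.

Section Final.
Variable K : fieldType.

Definition Lf (l : 'cV[K]_5) : {mpoly K[5]} := \sum_j l j 0 *: 'X_j.

Lemma Lf_homog l : Lf l \is 1.-homog.
Proof.
by apply: rpred_sum => j _; apply: rpredZ; rewrite dhomogX; apply/eqP; exact: mdeg1.
Qed.

Lemma Lf_eval l (x : 'I_5 -> K) : (Lf l).@[x] = (rv x *m l) 0 0.
Proof.
rewrite /Lf raddf_sum mxE; apply: eq_bigr => j _.
by rewrite -[LHS]/((l j 0 *: 'X_j).@[x]) mevalZ mevalXU mxE mulrC.
Qed.
End Final.

Unset Implicit Arguments.
Theorem corollary2p1 (K : closedFieldType)
  (hchar2 : ~~ (2%N \in [pchar K])) (hchar3 : ~~ (3%N \in [pchar K]))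
  (hchar5 : ~~ (5%N \in [pchar K]))
  (Q : 'I_3 -> {mpoly K[5]}) (hQ : smooth_CI_of_quadrics Q)
  (n : nat) (hn : (n <= 7)%N) (p : 'I_n -> 'I_5 -> K)
  (hp : forall i, on_CI Q (p i))
  (hdist : forall i j, i != j -> ~ proj_eq (p i) (p j)) :
  independent_on_quadrics p.
Proof.
case: hQ => hhom hsm.
have hqr : forall k, exists B : 'M[K]_5,
    (forall x, (Q k).@[x] = qf B (rv x)) /\
    (forall x j, (mderiv j (Q k)).@[x] = (rv x *m (B + B^T)) 0 j).
  by move=> k; exact: quad_rep (hhom k).
have [A hA] := fin_all_exists hqr.
have h2 : (2%:R : K) != 0 by apply: contra hchar2 => h; rewrite inE /= h.
have h3 : (3%:R : K) != 0 by apply: contra hchar3 => h; rewrite inE /= h.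
have h5 : (5%:R : K) != 0 by apply: contra hchar5 => h; rewrite inE /= h.
have h15 : (15%:R : K) != 0 by rewrite (_ : 15%N = 3 * 5)%N // natrM mulf_neq0.
have smooth : forall x : 'rV[K]_5, x != 0 -> (forall k, qf (A k) x = 0) -> \rank (Jm A x) = 3%N.
  move=> x xn0 hq; pose xf := fun j => x 0 j.
  have rvx : rv xf = x by apply/rowP => j; rewrite mxE.
  have hon : on_CI Q xf.
    split.
      case: (boolP [exists j, x 0 j != 0]) => [/existsP [j hj]|/existsPn hn0]; first by exists j.
      exfalso; move: xn0; have -> : x = 0 by apply/rowP => j; move: (hn0 j); rewrite negbK mxE => /eqP.
      by rewrite eqxx.
    by move=> k; rewrite (proj1 (hA k)) rvx hq.
  have := hsm xf hon.
  have -> // : jacobian Q xf = Jm A x.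
  by apply/matrixP => k j; rewrite /jacobian /Jm [LHS]mxE [RHS]mxE (proj2 (hA k)) rvx.
pose P i := rv (p i).
have nzP : forall i, P i != 0.
  move=> i; case: (hp i) => [[j hj] _]; apply/negP => /eqP h.
  by move: hj; have := congr1 (fun v : 'rV[K]_5 => v 0 j) h; rewrite !mxE => ->; rewrite eqxx.
have qP : forall i k, qf (A k) (P i) = 0.
  by move=> i k; rewrite -(proj1 (hA k)); case: (hp i) => _ ->.
have dP : forall i j, i != j -> ~ exists c, P i = c *: P j.
  move=> i j hij [c hc]; apply: (hdist i j hij); exists c => l.
  by have := congr1 (fun v : 'rV[K]_5 => v 0 l) hc; rewrite !mxE.
have hG : forall i, exists g : {mpoly K[5]},
    [/\ g \is 2.-homog, (forall j, j != i -> g.@[p j] = 0) & g.@[p i] != 0].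
  move=> i; have [l1 [l2 [hz hnz]]] := allGood smooth h2 h15 nzP qP dP i hn.
  exists (Lf l1 * Lf l2); split.
  - exact: (dhomogM (Lf_homog l1) (Lf_homog l2)).
  - by move=> j hj; rewrite mevalM !Lf_eval; exact: hz.
  - by rewrite mevalM !Lf_eval.
have [G hGi] := fin_all_exists hG.
move=> c; exists (\sum_i (c i / (G i).@[p i]) *: G i); split.
  by apply: rpred_sum => i _; apply: rpredZ; case: (hGi i).
move=> j; rewrite raddf_sum (bigD1 j) //= big1 => [|i hij].
  have [_ _ hnz] := hGi j.
  by rewrite addr0 -[X in X = _]/(((c j / (G j).@[p j]) *: G j).@[p j]) mevalZ divfK.
have [_ hz _] := hGi i.
rewrite -[X in X = _]/(((c i / (G i).@[p i]) *: G i).@[p j]) mevalZ (hz j); first by rewrite mulr0.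
by rewrite eq_sym.
Qed.
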